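(* For all positive integers $n\geq 2$ and $t$, the double Roman domination number of $S(K_n,t)$ is $$\gamma_{dR}(S(K_n,t))=\begin{cases}3\left\lceil\frac{n^t}{n+1}\right\rceil & \text{if } t \text{ is odd},\\[2pt] 3\left\lceil\frac{n^t}{n+1}\right\rceil-1 & \text{if } t \text{ is even}.\end{cases}$$
   Context: For a positive integer $n$ let $[n]=\{1,\dots,n\}$. For positive integers $n,t$, the Sierpiński graph $S(K_n,t)$ is the simple graph with vertex set $[n]^t$ (words $v_1v_2\cdots v_t$ with $v_i\in[n]$), in which $u_1\cdots u_t$ and $v_1\cdots v_t$ are adjacent if and only if there is $s\in[t]$ with $u_j=v_j$ for all $j<s$, $u_s\neq v_s$, and $u_j=v_s$ and $v_j=u_s$ for all $j>s$. A double Roman dominating function on a graph $G=(V,E)$ is a function $f:V\to\{0,1,2,3\}$ such that (i) every vertex $u$ with $f(u)=0$ has either a neighbor $v$ with $f(v)=3$ or two distinct neighbors $w,x$ with $f(w)=f(x)=2$, and (ii) every vertex $u$ with $f(u)=1$ has a neighbor $v$ with $f(v)\geq 3$. Its weight is $\sum_{v\in V}f(v)$, and the double Roman domination number $\gamma_{dR}(G)$ is the minimum weight of a double Roman dominating function on $G$. *)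

(* Defs.v *)
From mathcomp Require Import all_boot all_order.
Set Implicit Arguments. Unset Strict Implicit. Unset Printing Implicit Defensive.

Definition weight (T : finType) (f : {ffun T -> 'I_4}) : nat :=
  \sum_(v : T) (f v : nat).

Definition is_drdf (T : finType) (adj : rel T) (f : {ffun T -> 'I_4}) : bool :=
  [forall u : T,
    ((f u == 0 :> nat) ==>
       ([exists v : T, adj u v && (f v == 3 :> nat)] ||
        [exists w : T, exists x : T,
           [&& w != x, adj u w, adj u x, f w == 2 :> nat & f x == 2 :> nat]]))
    && ((f u == 1 :> nat) ==> [exists v : T, adj u v && (3 <= f v)])].

(* gamma_dR = minimum weight of a DRDF; the constant-3 function is always a
   DRDF of weight 3*#|T|, so this default is harmless. *)
Definition gamma_dR (T : finType) (adj : rel T) : nat :=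
  \big[minn/3 * #|T|]_(f : {ffun T -> 'I_4} | is_drdf adj f) weight f.

(* Sierpinski graph S(K_n,t): vertices are words of length t over 'I_n
   (letters 0..n-1 stand for 1..n), positions indexed 0..t-1. *)
Definition sierp_adj (n t : nat) : rel (t.-tuple 'I_n) :=
  fun u v => [exists s : 'I_t,
    [&& [forall j : 'I_t, (j < s) ==> (tnth u j == tnth v j)],
        tnth u s != tnth v s &
        [forall j : 'I_t, (s < j) ==>
            ((tnth u j == tnth v s) && (tnth v j == tnth u s))]]].

(* Main.v *)
Require Import Defs.
From mathcomp Require Import all_boot all_order zify.
Set Implicit Arguments. Unset Strict Implicit. Unset Printing Implicit Defensive.

Lemma adj_sym n t : symmetric (@sierp_adj n t).
Proof.
move=> u v; apply/existsP/existsP => -[s /and3P [H1 H2 H3]]; exists s;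
  apply/and3P; split.
- by apply/forallP => j; apply/implyP => /(implyP (forallP H1 j)); rewrite eq_sym.
- by rewrite eq_sym.
- by apply/forallP => j; apply/implyP => /(implyP (forallP H3 j)); rewrite andbC.
- by apply/forallP => j; apply/implyP => /(implyP (forallP H1 j)); rewrite eq_sym.
- by rewrite eq_sym.
- by apply/forallP => j; apply/implyP => /(implyP (forallP H3 j)); rewrite andbC.
Qed.

Lemma adj_cons n t (a b : 'I_n) (u v : t.-tuple 'I_n) :
  @sierp_adj n t.+1 [tuple of a :: u] [tuple of b :: v] =
  ((a == b) && @sierp_adj n t u v) ||
  [&& a != b, u == [tuple of nseq t b] & v == [tuple of nseq t a]].
Proof.
apply/existsP/idP.
- case=> s /and3P [H1 H2 H3].
  case: (unliftP ord0 s) => [s'|] Es; subst s.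
  + have Hab : a == b.
      by have := forallP H1 ord0; rewrite !tnth0 lift0.
    rewrite Hab /=; apply/orP; left; apply/existsP; exists s'; apply/and3P; split.
    * apply/forallP => j; apply/implyP => Hj.
      have := forallP H1 (lift ord0 j); rewrite !tnthS !lift0 ltnS Hj; exact.
    * by move: H2; rewrite !tnthS.
    * apply/forallP => j; apply/implyP => Hj.
      have := forallP H3 (lift ord0 j); rewrite !tnthS !lift0 ltnS Hj; exact.
  + move: H2; rewrite !tnth0 => H2; rewrite H2 /=; apply/orP; right.
    apply/andP; split; apply/eqP/eq_from_tnth => j; rewrite tnth_nseq;
    have := forallP H3 (lift ord0 j); rewrite !tnthS !tnth0 lift0 /= =>
      /andP [/eqP E1 /eqP E2] //.
- case/orP => [/andP [/eqP Hab /existsP [s /and3P [H1 H2 H3]]] |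
               /and3P [Hab /eqP Hu /eqP Hv]].
  + subst b; exists (lift ord0 s); apply/and3P; split.
    * apply/forallP => j; apply/implyP; case: (unliftP ord0 j) => [j'|] -> .
      -- rewrite !lift0 ltnS !tnthS => Hj; exact: (implyP (forallP H1 j') Hj).
      -- by rewrite !tnth0.
    * by rewrite !tnthS.
    * apply/forallP => j; apply/implyP; case: (unliftP ord0 j) => [j'|] -> .
      -- rewrite !lift0 ltnS !tnthS => Hj; exact: (implyP (forallP H3 j') Hj).
      -- by rewrite lift0.
  + exists ord0; apply/and3P; split.
    * by apply/forallP => j; rewrite ltn0.
    * by rewrite !tnth0.
    * apply/forallP => j; apply/implyP; case: (unliftP ord0 j) => [j'|] -> .
      -- by rewrite !tnthS !tnth0 Hu Hv !tnth_nseq !eqxx.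
      -- by rewrite ltnn.
Qed.
Lemma sum_cons n t (F : (t.+1).-tuple 'I_n -> nat) :
  \sum_(v : (t.+1).-tuple 'I_n) F v =
  \sum_(a : 'I_n) \sum_(u : t.-tuple 'I_n) F [tuple of a :: u].
Proof.
rewrite pair_big /=.
rewrite (reindex (fun p : 'I_n * t.-tuple 'I_n => [tuple of p.1 :: p.2])) //=.
exists (fun v : (t.+1).-tuple 'I_n => (thead v, [tuple of behead v])).
- by move=> [a u] _ /=; congr pair; apply/val_inj.
- by move=> v _ /=; rewrite [RHS]tuple_eta.
Qed.

Definition deg n t (u : t.-tuple 'I_n) := \sum_(v : t.-tuple 'I_n) (@sierp_adj n t u v : nat).
Definition isconst n t (u : t.-tuple 'I_n) := [exists c, u == [tuple of nseq t c]].

Lemma nseq_cons_eq n t (a c : 'I_n) (u : t.-tuple 'I_n) :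
  ([tuple of a :: u] == [tuple of nseq t.+1 c]) = (a == c) && (u == [tuple of nseq t c]).
Proof. by rewrite -!val_eqE /= eqseq_cons. Qed.

Lemma sum_ind_le1 n t (u : (t.+1).-tuple 'I_n) (P : pred 'I_n) :
  \sum_(b | P b) ((u == [tuple of nseq t.+1 b]) : nat) <= isconst u.
Proof.
case: (boolP (isconst u)) => [/existsP [c /eqP Hc] | Hn].
- apply: (@leq_trans (\sum_b ((u == [tuple of nseq t.+1 b]) : nat))).
    by rewrite [X in _ <= X](bigID P) /= leq_addr.
  rewrite (bigD1 c) //=.
  rewrite big1 ?addn0; first by case: (u == _).
  move=> b Hb; apply/eqP; rewrite eqb0; apply/negP => /eqP Hu.
  move: Hb; rewrite Hc in Hu; move/(congr1 (fun x : (t.+1).-tuple 'I_n => thead x)): Hu.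
  by rewrite /thead !tnth_nseq => ->; rewrite eqxx.
- rewrite leqn0 sum_nat_eq0; apply/forall_inP => b _; rewrite eqb0.
  by apply: contra Hn => Hb; apply/existsP; exists b.
Qed.

Lemma sum_eq1 n t (Y : t.-tuple 'I_n) (c : bool) :
  \sum_(w : t.-tuple 'I_n) ((c && (w == Y)) : nat) = c.
Proof.
rewrite (bigD1 Y) //= eqxx andbT big1 ?addn0 //.
by move=> w /negbTE ->; rewrite andbF.
Qed.

Lemma deg_cons n t (a : 'I_n) (u : t.-tuple 'I_n) :
  deg [tuple of a :: u] = deg u + \sum_(b | b != a) ((u == [tuple of nseq t b]) : nat).
Proof.
rewrite /deg sum_cons (bigD1 a) //=; congr addn.
- by apply: eq_bigr => w _; rewrite adj_cons eqxx /= orbF.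
- apply: eq_bigr => b Hb; rewrite -(sum_eq1 [tuple of nseq t a] (u == [tuple of nseq t b])).
  apply: eq_bigr => w _; rewrite adj_cons eq_sym (negbTE Hb) /=.
  by [].
Qed.

Lemma isconst_cons n t (a : 'I_n) (u : t.-tuple 'I_n) :
  isconst [tuple of a :: u] = (u == [tuple of nseq t a]).
Proof.
apply/existsP/idP => [[c]|Hu]; last by exists a; rewrite nseq_cons_eq eqxx.
by rewrite nseq_cons_eq => /andP [/eqP ->].
Qed.

Lemma deg0 n (u : 0.-tuple 'I_n) : deg u = 0.
Proof.
apply/eqP; rewrite sum_nat_eq0; apply/forallP => v; apply/implyP => _.
by rewrite eqb0; apply/negP => /existsP [[s Hs]].
Qed.

Lemma deg_le n t (u : t.-tuple 'I_n) : 0 < n -> deg u + isconst u <= n.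
Proof.
move=> n0; elim: t u => [|t IH] u.
  by rewrite deg0 /=; case: (isconst u).
case/tupleP: u => a w.
rewrite deg_cons isconst_cons -addnA.
have -> : \sum_(b | b != a) ((w == [tuple of nseq t b]) : nat) + (w == [tuple of nseq t a])
          = \sum_b ((w == [tuple of nseq t b]) : nat).
  by rewrite [RHS](bigD1 a) //= addnC.
case: t IH w => [|t] IH w.
  rewrite deg0 add0n (eq_bigr (fun _ => 1)); last first.
    by move=> b _; rewrite -val_eqE /= (size0nil (size_tuple w)).
  by rewrite sum1_card card_ord.
apply: leq_trans (IH w); rewrite leq_add2l.
by have := @sum_ind_le1 n t w predT.
Qed.

Lemma tuple0_eq T (x y : 0.-tuple T) : x = y.
Proof. by rewrite (tuple0 x) (tuple0 y). Qed.

Lemma nseq_inj n t (a b : 'I_n) :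
  [tuple of nseq t.+1 a] = [tuple of nseq t.+1 b] -> a = b.
Proof. by move/(congr1 val) => /= [->]. Qed.

Lemma two_cases n t (a b : 'I_n) (p q : t.-tuple 'I_n) (rr : (t.+1).-tuple 'I_n) :
  a != b -> ~~ @sierp_adj n t.+1 [tuple of a :: p] [tuple of b :: q] ->
  sierp_adj [tuple of a :: p] rr -> sierp_adj [tuple of b :: q] rr ->
  rr = [tuple of a :: nseq t b] \/ rr = [tuple of b :: nseq t a].
Proof.
move=> Hab Hpq; case/tupleP: rr => c r; rewrite !adj_cons.
case/orP => [/andP [/eqP Hac Hpr] | /and3P [Hac /eqP Hp /eqP Hr]];
case/orP => [/andP [/eqP Hbc Hqr] | /and3P [Hbc /eqP Hq /eqP Hr']].
- by subst; rewrite eqxx in Hab.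
- by left; subst.
- by right; subst.
- exfalso; move: Hpq; rewrite adj_cons (negbTE Hab) /=.
  case: t p q r Hp Hr Hq Hr' => [|t] p q r0 Hp Hr Hq Hr'.
    by rewrite (tuple0_eq p [tuple of nseq 0 b]) (tuple0_eq q [tuple of nseq 0 a]) !eqxx.
  by move: Hab; rewrite -(nseq_inj (etrans (esym Hr) Hr')) eqxx.
Qed.

Lemma common3 n t (p q r1 r2 r3 : t.-tuple 'I_n) :
  p != q -> ~~ sierp_adj p q ->
  sierp_adj p r1 -> sierp_adj q r1 ->
  sierp_adj p r2 -> sierp_adj q r2 ->
  sierp_adj p r3 -> sierp_adj q r3 ->
  r1 != r2 -> r2 != r3 -> r3 != r1 -> False.
Proof.
elim: t p q r1 r2 r3 => [|t IH] p q r1 r2 r3 Hpq Hnadj.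
  by move=> /existsP [[]].
case/tupleP: p Hpq Hnadj => a p; case/tupleP: q => b q Hpq Hnadj.
case: (eqVneq a b) => [Hab|Hab].
- subst b.
  have Hpq' : p != q by apply: contra Hpq => /eqP ->.
  have Hn' : ~~ sierp_adj p q by move: Hnadj; rewrite adj_cons eqxx /= orbF.
  have H : forall (c : 'I_n) (r : t.-tuple 'I_n), sierp_adj [tuple of a :: p] [tuple of c :: r] ->
      sierp_adj [tuple of a :: q] [tuple of c :: r] ->
      c = a /\ sierp_adj p r /\ sierp_adj q r.
    move=> c r; rewrite !adj_cons.
    case/orP => [/andP [/eqP Hac Hpr] | /and3P [Hac /eqP Hp /eqP Hr]];
    case/orP => [/andP [/eqP Hbc Hqr] | /and3P [Hbc /eqP Hq /eqP Hr']].
    + by subst.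
    + by rewrite Hac eqxx in Hbc.
    + by rewrite Hbc eqxx in Hac.
    + by rewrite -Hq in Hp; rewrite Hp eqxx in Hpq'.
  case/tupleP: r1 => c1 s1; case/tupleP: r2 => c2 s2; case/tupleP: r3 => c3 s3.
  move=> H1 H1' H2 H2' H3 H3'.
  case: (H _ _ H1 H1') => E1 [A1 B1]; case: (H _ _ H2 H2') => E2 [A2 B2];
  case: (H _ _ H3 H3') => E3 [A3 B3]; subst c1 c2 c3 => D12 D23 D31.
  apply: (IH p q s1 s2 s3) => //.
  + by apply: contra D12 => /eqP ->.
  + by apply: contra D23 => /eqP ->.
  + by apply: contra D31 => /eqP ->.
- move=> H1 H1' H2 H2' H3 H3'.
  case: (two_cases Hab Hnadj H1 H1') => ->;
  case: (two_cases Hab Hnadj H2 H2') => ->;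
  case: (two_cases Hab Hnadj H3 H3') => ->; rewrite ?eqxx //.
Qed.


Fixpoint potS (s : seq nat) : nat :=
  if s is a :: s' then a * 2 ^ size s' + potS s' else 0.
Definition pot t (u : t.-tuple 'I_2) := potS (map val u).

Lemma pot_cons t (a : 'I_2) (u : t.-tuple 'I_2) :
  pot [tuple of a :: u] = a * 2 ^ t + pot u.
Proof. by rewrite /pot /= size_map size_tuple. Qed.

Lemma pot_lt t (u : t.-tuple 'I_2) : pot u < 2 ^ t.
Proof.
elim: t u => [|t IH] u; first by rewrite (tuple0 u).
case/tupleP: u => a u; rewrite pot_cons expnS.
have := IH u; case: a => [[|[|]]] //= _; lia.
Qed.

Lemma pot_nseq t (c : 'I_2) : pot [tuple of nseq t c] + c = c * 2 ^ t.
Proof.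
elim: t => [|t IH]; first by rewrite /pot /= muln1.
have -> : [tuple of nseq t.+1 c] = [tuple of c :: [tuple of nseq t c]] by apply/val_inj.
rewrite pot_cons expnS; lia.
Qed.

Lemma pot_inj t (u v : t.-tuple 'I_2) : pot u = pot v -> u = v.
Proof.
elim: t u v => [|t IH] u v; first by rewrite (tuple0 u) (tuple0 v).
case/tupleP: u => a u; case/tupleP: v => b v; rewrite !pot_cons => E.
have Hu := pot_lt u; have Hv := pot_lt v.
have Hab : a = b.
  apply/val_inj; move: E Hu Hv; case: a => [[|[|]]] //; case: b => [[|[|]]] //= *; lia.
subst b; have -> : u = v by apply: IH; lia.
by [].
Qed.

Lemma pot_adj t (u v : t.-tuple 'I_2) :
  sierp_adj u v -> pot v = pot u + 1 \/ pot u = pot v + 1.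
Proof.
elim: t u v => [|t IH] u v; first by move=> /existsP [[]].
case/tupleP: u => a u; case/tupleP: v => b v; rewrite adj_cons.
case/orP => [/andP [/eqP <- /IH H] | /and3P [Hab /eqP Hu /eqP Hv]].
  by rewrite !pot_cons; lia.
rewrite !pot_cons Hu Hv; clear Hu Hv.
have := pot_nseq t a; have := pot_nseq t b.
move: Hab; case: a => [[|[|]]] //; case: b => [[|[|]]] //= *; lia.
Qed.

Inductive cst (n : nat) := CAll | CE of 'I_n | CO of 'I_n | CU.
Arguments CAll {n}. Arguments CU {n}.

Definition cnext n (st : cst n) (a : 'I_n) : cst n :=
  match st with
  | CO m => if a == m then CAll else CE m
  | CAll => CO a
  | CE j => if a == j then CU else CO j
  | CU => CE a
  end.

Fixpoint code n (st : cst n) (s : seq 'I_n) : bool :=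
  match s with
  | [::] => if st is CAll then true else false
  | a :: s' => code (cnext st a) s'
  end.

Definition dom n t (st : cst n) (v : t.-tuple 'I_n) :=
  code st v || [exists w : t.-tuple 'I_n, sierp_adj v w && code st w].

Lemma dom_lift n t (st : cst n) (a : 'I_n) (w : t.-tuple 'I_n) :
  dom (cnext st a) w -> dom st [tuple of a :: w].
Proof.
case/orP => [H | /existsP [w' /andP [Ha Hc]]]; apply/orP; [by left | right].
apply/existsP; exists [tuple of a :: w']; rewrite adj_cons eqxx Ha /=.
exact: Hc.
Qed.

Lemma dom_nb n t (st : cst n) (v w : t.-tuple 'I_n) :
  sierp_adj v w -> code st w -> dom st v.
Proof. by move=> H1 H2; apply/orP; right; apply/existsP; exists w; rewrite H1. Qed.

Definition domQ n t :=
  if odd t then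
    (forall m (v : t.-tuple 'I_n), dom (CO m) v) /\
    (forall m : 'I_n, code (CO m) (nseq t m)) /\
    (forall v : t.-tuple 'I_n, ~~ isconst v -> dom CU v)
  else
    (forall v : t.-tuple 'I_n, dom CAll v) /\
    (forall c : 'I_n, code CAll (nseq t c)) /\
    (forall j (v : t.-tuple 'I_n), v != [tuple of nseq t j] -> dom (CE j) v).

Lemma nseqS_tuple n t (c : 'I_n) :
  [tuple of nseq t.+1 c] = [tuple of c :: [tuple of nseq t c]].
Proof. by apply/val_inj. Qed.

Lemma domQ_all n t : domQ n t.
Proof.
elim: t => [|t IH].
  rewrite /domQ /=; split; first by move=> v; rewrite (tuple0 v).
  split=> // j v H; exfalso; move: H; apply/negP; rewrite negbK; apply/eqP;
  exact: tuple0_eq.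
rewrite /domQ /=; move: IH; rewrite /domQ; case: (odd t) => /=.
- case=> [HO [HOc HU]]; split.
  + case/tupleP => a w; apply: dom_lift => /=; exact: HO.
  split; first by move=> c /=; exact: HOc.
  move=> j; case/tupleP => a w Hv.
  case: (eqVneq a j) => [Haj|Haj]; last first.
    by apply: dom_lift => /=; rewrite (negbTE Haj); exact: HO.
  subst a; case: (boolP (isconst w)) => [/existsP [c /eqP Hw] | Hw]; last first.
    by apply: dom_lift => /=; rewrite eqxx; exact: HU.
  subst w; have Hcj : c != j.
    by apply: contra Hv => /eqP ->; rewrite nseqS_tuple.
  apply: (@dom_nb _ _ _ _ [tuple of c :: [tuple of nseq t j]]).
    by rewrite adj_cons eq_sym Hcj !eqxx orbT.
  by rewrite /= (negbTE Hcj); exact: HOc.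
- case=> [HA [HAc HE]]; split.
  + move=> m; case/tupleP => a w.
    case: (eqVneq a m) => [Ham|Ham].
      by apply: dom_lift => /=; rewrite Ham eqxx; exact: HA.
    case: (eqVneq w [tuple of nseq t m]) => [Hw|Hw]; last first.
      by apply: dom_lift => /=; rewrite (negbTE Ham); exact: HE.
    subst w; apply: (@dom_nb _ _ _ _ [tuple of m :: [tuple of nseq t a]]).
      by rewrite adj_cons (negbTE Ham) !eqxx.
    by rewrite /= eqxx; exact: HAc.
  split; first by move=> m /=; rewrite eqxx; exact: HAc.
  case/tupleP => a w; rewrite isconst_cons => Hw; apply: dom_lift => /=.
  exact: HE.
Qed.

Definition cnt n t (st : cst n) := \sum_(v : t.-tuple 'I_n) (code st v : nat).

Lemma cnt_S n t (st : cst n) : cnt t.+1 st = \sum_a cnt t (cnext st a).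
Proof. by rewrite /cnt sum_cons. Qed.

Lemma sum_split_at n (m : 'I_n) (F : 'I_n -> nat) (c : nat) :
  (forall a, a != m -> F a = c) -> \sum_a F a = F m + (n - 1) * c.
Proof.
move=> H; rewrite (bigD1 m) //=; congr addn.
rewrite (eq_bigr (fun _ => c)) // sum_nat_const cardC1 card_ord.
by rewrite subn1.
Qed.

Lemma sum_const_mul n (F : 'I_n -> nat) (k c : nat) :
  (forall a, k * F a = c) -> k * \sum_a F a = n * c.
Proof.
move=> H; rewrite big_distrr /= (eq_bigr (fun _ => c)) //.
by rewrite sum_nat_const card_ord.
Qed.

Definition cntQ n t :=
  if odd t then
    (forall m : 'I_n, (n.+1) * cnt t (CO m) = n ^ t + 1) /\
    (n.+1) * cnt t (@CU n) + n = n ^ t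
  else
    (n.+1) * cnt t (@CAll n) = n ^ t + n /\
    (forall j : 'I_n, (n.+1) * cnt t (CE j) + 1 = n ^ t).

Lemma cntQ_all n t : 0 < n -> cntQ n t.
Proof.
move=> n0; elim: t => [|t IH].
  rewrite /cntQ /= /cnt; split.
    rewrite (eq_bigr (fun _ => 1)) ?sum1_card ?card_tuple ?expn0 ?muln1 ?addn1 //.
    by move=> v; rewrite (tuple0 v).
  move=> j; rewrite big1 ?muln0 //.
  by move=> v; rewrite (tuple0 v).
rewrite /cntQ /=; move: IH; rewrite /cntQ; case: (odd t) => /= [[HO HU]|[HA HE]].
- split.
  + rewrite cnt_S (@sum_const_mul n _ n.+1 (n ^ t + 1)) ?expnS; first lia.
    by move=> a /=; exact: HO.
  + move=> j; rewrite cnt_S (@sum_split_at n j _ (cnt t (CO j))); last first.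
      by move=> a /negbTE /= ->.
    rewrite /= eqxx expnS; have := HO j; nia.
- split.
  + move=> m; rewrite cnt_S (@sum_split_at n m _ (cnt t (CE m))); last first.
      by move=> a /negbTE /= ->.
    rewrite /= eqxx expnS; have := HE m; nia.
  + rewrite cnt_S.
    have H : n.+1 * (\sum_(a : 'I_n) cnt t (cnext (@CU n) a)) = n * (n ^ t - 1).
      apply: (@sum_const_mul n (fun a => cnt t (cnext CU a))) => a /=.
      have := HE a; lia.
    rewrite H expnS mulnBr muln1 subnK //; apply: leq_pmulr.
    by rewrite expn_gt0 n0.
Qed.


Definition cval (T : finType) (f : {ffun T -> 'I_4}) v : nat :=
  if (f v : nat) == 3 then 2 else if (f v : nat) == 2 then 1 else 0.
Definition gval (T : finType) (adj : rel T) (f : {ffun T -> 'I_4}) u : nat :=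
  \sum_v (adj u v : nat) * cval f v.
Definition hval (T : finType) (f : {ffun T -> 'I_4}) u : nat :=
  if (f u : nat) <= 1 then 2 else 0.
Definition degT (T : finType) (adj : rel T) u : nat := \sum_v (adj u v : nat).

Lemma term_le (T : finType) (F : T -> nat) v : F v <= \sum_u F u.
Proof. by rewrite (bigD1 v) //= leq_addr. Qed.

Lemma h_le_g (T : finType) (adj : rel T) f u :
  is_drdf adj f -> hval f u <= gval adj f u.
Proof.
move=> /forallP /(_ u) /andP [H0 H1]; rewrite /hval.
case: ifP => // Hle.
have H3 : forall v, adj u v -> (f v : nat) == 3 -> 2 <= gval adj f u.
  move=> v Ha Hv; apply: leq_trans (term_le _ v); by rewrite Ha /cval Hv.
have: ((f u : nat) == 0) || ((f u : nat) == 1) by case: (f u : nat) Hle => [|[|]].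
case/orP => [Hf | Hf].
- case/orP: (implyP H0 Hf) => [/existsP [v /andP [Ha Hv]] | /existsP [w /existsP [x Hwx]]].
    exact: H3 Ha Hv.
  case/and5P: Hwx => Hne Hw Hx Hfw Hfx.
  rewrite /gval (bigD1 w) //= (bigD1 x) /=; last by rewrite eq_sym.
  by rewrite Hw Hx /cval (eqP Hfw) (eqP Hfx) /= addnA leq_addr.
- case/existsP: (implyP H1 Hf) => v /andP [Ha Hv].
  apply: (H3 v Ha); have := ltn_ord (f v); move: Hv; lia.
Qed.

Lemma sum_g (T : finType) (adj : rel T) f : symmetric adj ->
  \sum_u gval adj f u = \sum_v cval f v * degT adj v.
Proof.
move=> Hs; rewrite /gval exchange_big /=; apply: eq_bigr => v _.
rewrite /degT big_distrr /=; apply: eq_bigr => u _.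
by rewrite Hs mulnC.
Qed.

Definition Eex (T : finType) (adj : rel T) f := \sum_u (gval adj f u - hval f u).
Definition Dex (T : finType) (adj : rel T) f n := \sum_v cval f v * (n - degT adj v).

Lemma I1 (T : finType) (adj : rel T) f : is_drdf adj f ->
  \sum_u hval f u + Eex adj f = \sum_u gval adj f u.
Proof.
move=> Hd; rewrite /Eex -big_split /=; apply: eq_bigr => u _.
by rewrite subnKC // h_le_g.
Qed.

Lemma I2 (T : finType) (adj : rel T) f n : (forall v, degT adj v <= n) ->
  \sum_v cval f v * degT adj v + Dex adj f n = n * \sum_v cval f v.
Proof.
move=> Hd; rewrite /Dex -big_split big_distrr /=; apply: eq_bigr => v _.
by rewrite -mulnDr subnKC // mulnC.
Qed.

Lemma E0 (T : finType) (adj : rel T) f u : is_drdf adj f -> Eex adj f = 0 ->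
  gval adj f u = hval f u.
Proof.
move=> Hd /eqP; rewrite /Eex sum_nat_eq0 => /forallP /(_ u) /implyP /(_ isT).
by rewrite subn_eq0 => H; apply/eqP; rewrite eqn_leq H h_le_g.
Qed.

Lemma D0 (T : finType) (adj : rel T) f n v : (forall v, degT adj v <= n) ->
  Dex adj f n = 0 -> 0 < cval f v -> degT adj v = n.
Proof.
move=> Hd /eqP; rewrite /Dex sum_nat_eq0 => /forallP /(_ v) /implyP /(_ isT).
rewrite muln_eq0 => /orP [/eqP -> //| ]; rewrite subn_eq0 => H _.
by apply/eqP; rewrite eqn_leq Hd H.
Qed.

Definition cntf (T : finType) (f : {ffun T -> 'I_4}) k := \sum_v (((f v : nat) == k) : nat).

Lemma counts (T : finType) (f : {ffun T -> 'I_4}) :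
  [/\ #|T| = cntf f 0 + cntf f 1 + cntf f 2 + cntf f 3,
      weight f = cntf f 1 + 2 * cntf f 2 + 3 * cntf f 3,
      \sum_u hval f u = 2 * (cntf f 0 + cntf f 1) &
      \sum_u cval f u = 2 * cntf f 3 + cntf f 2].
Proof.
rewrite /cntf /weight /hval /cval -sum1_card big_distrr /= !big_distrr -!big_split /=.
split.
- rewrite big_mkcond /=; apply: eq_bigr => v _.
  by case: (f v) => [[|[|[|[|]]]]].
- by apply: eq_bigr => v _; case: (f v) => [[|[|[|[|]]]]].
- by rewrite big_distrr; apply: eq_bigr => v _; case: (f v) => [[|[|[|[|]]]]].
- by apply: eq_bigr => v _; case: (f v) => [[|[|[|[|]]]]].
Qed.

Lemma sum_card (T : finType) (P : pred T) : \sum_v (P v : nat) = #|[set v | P v]|.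
Proof.
rewrite -sum1_card [RHS]big_mkcond /=; apply: eq_bigr => v _; rewrite inE.
by case: (P v).
Qed.

Lemma P1 (T : finType) (adj : rel T) f p r : is_drdf adj f -> Eex adj f = 0 ->
  (f p : nat) = 2 -> adj p r -> cval f r = 0.
Proof.
move=> Hd HE Hp Ha; have := E0 p Hd HE; rewrite /hval Hp /= /gval.
move/eqP; rewrite sum_nat_eq0 => /forallP /(_ r); rewrite Ha mul1n.
by move/eqP.
Qed.

Lemma P3 (T : finType) (adj : rel T) f p r : is_drdf adj f -> Eex adj f = 0 ->
  (f p : nat) = 2 -> adj r p -> cval f r = 0 ->
  exists v, [/\ v != p, adj r v & (f v : nat) = 2].
Proof.
move=> Hd HE Hp Ha Hc.
have Hr : (f r : nat) <= 1.
  move: Hc; rewrite /cval; have := ltn_ord (f r).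
  case: (f r : nat) => [|[|[|[|]]]] //.
have := E0 r Hd HE; rewrite /hval Hr /gval (bigD1 p) //= Ha /cval Hp /= => H.
have H1 : \sum_(v | v != p) (adj r v : nat) * cval f v = 1 by rewrite /cval; lia.
have [v Hv] : exists v, (v != p) && (0 < (adj r v : nat) * cval f v).
  apply/existsP; apply: contraT; rewrite negb_exists => /forallP Hn.
  move: H1; rewrite big1 // => v Hv; have := Hn v; rewrite Hv /=.
  by rewrite lt0n negbK => /eqP.
case/andP: Hv => Hvp Hpos; exists v.
have Hle : (adj r v : nat) * cval f v <= 1.
  by rewrite -H1 (bigD1 v) //= leq_addr.
move: Hpos Hle; rewrite /cval; case: (adj r v) => //=; rewrite mul1n.
have := ltn_ord (f v); case: (f v : nat) => [|[|[|[|]]]] //.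
Qed.

Lemma degT_card (T : finType) (adj : rel T) p : degT adj p = #|[set r | adj p r]|.
Proof. exact: sum_card. Qed.

Lemma tight3 n t (f : {ffun t.-tuple 'I_n -> 'I_4}) :
  2 < n -> is_drdf (@sierp_adj n t) f -> Eex (@sierp_adj n t) f = 0 ->
  Dex (@sierp_adj n t) f n = 0 -> cntf f 2 = 2 -> False.
Proof.
move=> n3 Hd HE HD H2.
have Hdeg : forall v : t.-tuple 'I_n, degT (@sierp_adj n t) v <= n.
  move=> v; apply: leq_trans (@deg_le n t v (ltnW (ltnW n3))); exact: leq_addr.
move: H2; rewrite /cntf sum_card => H2.
set S := [set v | (f v : nat) == 2] in H2.
have [p Hp] : exists p, p \in S by apply/card_gt0P; rewrite H2.
have Hp2 : (f p : nat) = 2 by move: Hp; rewrite inE => /eqP.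
have : #|S :\ p| == 1 by move: H2; rewrite (cardsD1 p S) Hp add1n => -[->].
case/cards1P => q Hq.
have Hother : forall v, (f v : nat) = 2 -> v != p -> v = q.
  move=> v Hv Hvp; have : v \in S :\ p by rewrite !inE Hvp Hv eqxx.
  by rewrite Hq inE => /eqP.
have Hdp : degT (@sierp_adj n t) p = n.
  by apply: (D0 (f := f) Hdeg HD); rewrite /cval Hp2.
have : 2 < #|[set r | @sierp_adj n t p r]| by rewrite -degT_card Hdp.
case/card_gt2P => r1 [r2 [r3 [[H1 H2' H3] [D12 D23 D31]]]].
rewrite !inE in H1 H2' H3.
have Hq2 : (f q : nat) = 2.
  have : q \in S :\ p by rewrite Hq inE.
  by rewrite !inE => /andP [_ /eqP].
have Hqp : q != p.
  have : q \in S :\ p by rewrite Hq inE.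
  by rewrite !inE => /andP [].
have Hc : forall r, sierp_adj p r -> sierp_adj q r.
  move=> r Hr; have Hcr := P1 Hd HE Hp2 Hr.
  have [v [Hvp Hrv Hfv]] := P3 Hd HE Hp2 (etrans (adj_sym _ _) Hr) Hcr.
  by rewrite adj_sym -(Hother v Hfv Hvp).
have Hnpq : ~~ sierp_adj p q.
  apply/negP => Hpq; have := P1 Hd HE Hp2 Hpq; by rewrite /cval Hq2.
apply: (common3 (q := q) _ Hnpq H1 (Hc _ H1) H2' (Hc _ H2') H3 (Hc _ H3)) => //.
by rewrite eq_sym.
Qed.

Lemma tight2 t (f : {ffun t.-tuple 'I_2 -> 'I_4}) :
  is_drdf (@sierp_adj 2 t) f -> Eex (@sierp_adj 2 t) f = 0 ->
  Dex (@sierp_adj 2 t) f 2 = 0 -> 0 < cntf f 2 -> False.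
Proof.
move=> Hd HE HD H2.
have Hdeg : forall v : t.-tuple 'I_2, degT (@sierp_adj 2 t) v <= 2.
  move=> v; apply: leq_trans (@deg_le 2 t v isT); exact: leq_addr.
move: H2; rewrite /cntf sum_card => /card_gt0P [p0 Hp0].
pose P := fun v : t.-tuple 'I_2 => (f v : nat) == 2.
have HP0 : P p0 by move: Hp0; rewrite inE.
case: (arg_maxnP (@pot t) HP0) => p /eqP Hp2 Hmax.
have Hdp : degT (@sierp_adj 2 t) p = 2.
  by apply: (D0 (f := f) Hdeg HD); rewrite /cval Hp2.
have [r [Hr Hpr]] : exists r, sierp_adj p r /\ pot r = pot p + 1.
  case: (pickP [pred r | @sierp_adj 2 t p r && (pot r == pot p + 1)]) =>
     [r /andP [H1 /eqP H3] | Hn]; first by exists r.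
  exfalso.
  have Hsub : [set r | @sierp_adj 2 t p r] \subset [set r | pot r + 1 == pot p].
    apply/subsetP => r; rewrite !inE => Har.
    have := Hn r; rewrite /= Har /=; case: (pot_adj Har) => -> ; first by rewrite eqxx.
    by rewrite eqxx.
  have := subset_leq_card Hsub; rewrite -degT_card Hdp.
  have : #|[set r : t.-tuple 'I_2 | pot r + 1 == pot p]| <= 1.
    rewrite leqNgt; apply/negP => /card_gt1P [a [b [Ha Hb Hab]]].
    move: Ha Hb; rewrite !inE => /eqP Ha /eqP Hb.
    by move: Hab; rewrite (@pot_inj t a b) ?eqxx //; lia.
  move=> Ha Hb; have := leq_trans Hb Ha. by [].
have Hcr := P1 Hd HE Hp2 Hr.
have [v [Hvp Hrv Hfv]] := P3 Hd HE Hp2 (etrans (adj_sym _ _) Hr) Hcr.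
have := Hmax v (introT eqP Hfv); rewrite /=.
case: (pot_adj Hrv) => Hv.
- lia.
- have Hpv : pot p = pot v by lia.
  by move: Hvp; rewrite (pot_inj Hpv) eqxx.
Qed.

Lemma bigmin_le_term (I : finType) (P : pred I) (F : I -> nat) x j :
  P j -> \big[minn/x]_(i | P i) F i <= F j.
Proof.
move=> Pj; have : j \in index_enum I by rewrite mem_index_enum.
elim: (index_enum I) => // i r IH; rewrite inE big_cons.
case/orP => [/eqP <- | Hj]; first by rewrite Pj geq_minl.
case: (P i); last exact: IH.
exact: leq_trans (geq_minr _ _) (IH Hj).
Qed.

Lemma bigmin_geq (I : finType) (P : pred I) (F : I -> nat) x L :
  L <= x -> (forall i, P i -> L <= F i) -> L <= \big[minn/x]_(i | P i) F i.
Proof.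
move=> Hx HF; apply: (big_ind (fun m => L <= m)) => //.
by move=> a b Ha Hb; rewrite leq_min Ha Hb.
Qed.

Lemma lower_facts n t (f : {ffun t.-tuple 'I_n -> 'I_4}) :
  0 < n -> is_drdf (@sierp_adj n t) f ->
  exists o z y x G, [/\ n ^ t = o + z + y + x, weight f = z + 2 * y + 3 * x,
     2 * (o + z) + Eex (@sierp_adj n t) f = G,
     G + Dex (@sierp_adj n t) f n = n * (2 * x + y) & cntf f 2 = y].
Proof.
move=> n0 Hd.
have Hdeg : forall v : t.-tuple 'I_n, degT (@sierp_adj n t) v <= n.
  move=> v; apply: leq_trans (@deg_le n t v n0); exact: leq_addr.
case: (counts f) => HN Hw Hh Hc.
exists (cntf f 0), (cntf f 1), (cntf f 2), (cntf f 3), (\sum_u gval (@sierp_adj n t) f u).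
split.
- by rewrite -HN card_tuple card_ord.
- by rewrite Hw; lia.
- by rewrite -Hh (I1 Hd).
- by rewrite sum_g ?(I2 _ Hdeg) ?Hc //; exact: adj_sym.
- by [].
Qed.

Definition o3 : 'I_4 := @Ordinal 4 3 isT.
Definition o2 : 'I_4 := @Ordinal 4 2 isT.
Definition o0 : 'I_4 := @Ordinal 4 0 isT.

Lemma ub_odd n t (m : 'I_n) :
  (forall v : t.-tuple 'I_n, dom (CO m) v) ->
  exists f : {ffun t.-tuple 'I_n -> 'I_4},
    is_drdf (@sierp_adj n t) f /\ weight f = 3 * cnt t (CO m).
Proof.
move=> Hdom.
exists [ffun v : t.-tuple 'I_n => if code (CO m) v then o3 else o0]; split.
- apply/forallP => u; rewrite !ffunE.
  case Hu: (code (CO m) u) => //=.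
  case/orP: (Hdom u); first by rewrite Hu.
  case/existsP => w /andP [Ha Hw]; rewrite andbT; apply/orP; left; apply/existsP; exists w.
  by rewrite ffunE Ha Hw.
- rewrite /weight /cnt big_distrr /=; apply: eq_bigr => v _; rewrite ffunE.
  by case: (code (CO m) v).
Qed.

Lemma ub_even n t (j : 'I_n) :
  (forall v : t.-tuple 'I_n, v != [tuple of nseq t j] -> dom (CE j) v) ->
  exists f : {ffun t.-tuple 'I_n -> 'I_4},
    is_drdf (@sierp_adj n t) f /\ weight f <= 3 * cnt t (CE j) + 2.
Proof.
move=> Hdom.
exists [ffun v : t.-tuple 'I_n => if code (CE j) v then o3
          else if v == [tuple of nseq t j] then o2 else o0]; split.
- apply/forallP => u; rewrite !ffunE.
  case Hu: (code (CE j) u) => //=.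
  case Hn: (u == [tuple of nseq t j]) => //=.
  case/orP: (Hdom u (negbT Hn)); first by rewrite Hu.
  case/existsP => w /andP [Ha Hw]; rewrite andbT; apply/orP; left; apply/existsP; exists w.
  by rewrite ffunE Ha Hw.
- rewrite /weight; apply: (@leq_trans (\sum_(v : t.-tuple 'I_n) (3 * (code (CE j) v : nat) +
                              2 * ((v == [tuple of nseq t j]) : nat)))).
    apply: leq_sum => v _; rewrite ffunE.
    by case: (code (CE j) v); case: (v == _).
  rewrite big_split /= -big_distrr -big_distrr /= leq_add2l.
  by rewrite (bigD1 [tuple of nseq t j]) //= eqxx big1 // => v /negbTE ->.
Qed.

Lemma arith_odd3 n N x y z o E D G q : 3 <= n -> N = o+z+y+x -> 2*(o+z) + E = G ->
  G + D = n*(2*x+y) -> n.+1 * q = N + 1 -> 3 * q <= z + 2*y + 3*x.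
Proof. move=> *; nia. Qed.

Lemma arith_even n N x y z o E D G e : 2 <= n -> N = o+z+y+x -> 2*(o+z) + E = G ->
  G + D = n*(2*x+y) -> n.+1 * e + 1 = N -> z + 2*y + 3*x < 3 * e + 2 ->
  [/\ E = 0, D = 0, y %% 3 = 2 & (2 < n -> y = 2)].
Proof.
move=> n2 HN H1 H2 He Hw.
have K : 6 * N + 3 * E + 3 * D + (n - 2) * y = 2 * n.+1 * (3 * x + 2 * y).
  rewrite mulnBl; nia.
rewrite -He in K.
have Hs : 3 * x + 2 * y = 3 * e + 1.
  have : 3 * e + 1 <= 3 * x + 2 * y.
    rewrite leqNgt; apply/negP => Hlt.
    have : 2 * n.+1 * (3 * x + 2 * y) <= 2 * n.+1 * (3 * e) by rewrite leq_mul2l; lia.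
    nia.
  lia.
have K2 : 3 * E + 3 * D + (n - 2) * y = 2 * n - 4.
  rewrite Hs !mulnDr !mulnA in K; lia.
have Hy : 2 <= y by lia.
have : (n - 2) * 2 <= (n - 2) * y by rewrite leq_mul2l Hy orbT.
move=> H; split; try lia.
move=> n3; have : (n - 2) * y <= (n - 2) * 2 by lia.
rewrite leq_mul2l; case/orP; [lia | ].
move=> Hy2; have : y %% 3 = 2 by lia. lia.
Qed.

Theorem theorem3p3 (n t : nat) : 2 <= n -> 1 <= t ->
  gamma_dR (@sierp_adj n t) =
    (if odd t then 3 * ((n ^ t + n) %/ (n + 1))
     else 3 * ((n ^ t + n) %/ (n + 1)) - 1).
Proof.
move=> n2 t1; have n0 : 0 < n by lia.
pose m0 : 'I_n := Ordinal n0.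
have HQ := @cntQ_all n t n0; have HD := domQ_all n t.
have Hcard : #|{: t.-tuple 'I_n}| = n ^ t by rewrite card_tuple card_ord.
have Hpos : 0 < n ^ t by rewrite expn_gt0 n0.
move: HQ HD; rewrite /cntQ /domQ /gamma_dR.
case Ho: (odd t) => /=; [move=> [HO HU] [HdO [HOc HdU]] | move=> [HA HE] [HdA [HAc HdE]]].
- set q := cnt t (CO m0); have Hq : n.+1 * q = n ^ t + 1 := HO m0.
  have -> : (n ^ t + n) %/ (n + 1) = q.
    have -> : n ^ t + n = q * (n + 1) + (n - 1) by lia.
    rewrite divnMDl ?addn1 // divn_small ?addn0 //; lia.
  apply/eqP; rewrite eqn_leq; apply/andP; split.
  + have [f [Hf Hw]] := @ub_odd n t m0 (HdO m0).
    by apply: leq_trans (bigmin_le_term _ _ Hf) _; rewrite Hw.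
  + apply: bigmin_geq; first by rewrite Hcard; nia.
    move=> f Hd.
    have [o [z [y [x [G [HN Hw HG HG2 Hy]]]]]] := lower_facts n0 Hd.
    rewrite Hw.
    case: (ltnP 2 n) => Hn.
      exact: (arith_odd3 Hn HN HG HG2 Hq).
    have n2' : n = 2 by lia.
    rewrite leqNgt; apply/negP => Hlt.
    have HE0 : Eex (@sierp_adj n t) f = 0 by subst n; lia.
    have HD0 : Dex (@sierp_adj n t) f n = 0 by subst n; lia.
    have Hy0 : 0 < y by subst n; lia.
    subst n y; exact: (tight2 Hd HE0 HD0 Hy0).
- set e := cnt t (CE m0); have He : n.+1 * e + 1 = n ^ t := HE m0.
  have -> : (n ^ t + n) %/ (n + 1) = e.+1.
    have -> : n ^ t + n = e.+1 * (n + 1) + 0 by lia.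
    by rewrite divnMDl ?addn1 // div0n addn0.
  have -> : 3 * e.+1 - 1 = 3 * e + 2 by lia.
  apply/eqP; rewrite eqn_leq; apply/andP; split.
  + have [f [Hf Hw]] := @ub_even n t m0 (HdE m0).
    exact: leq_trans (bigmin_le_term _ _ Hf) Hw.
  + apply: bigmin_geq; first by rewrite Hcard; nia.
    move=> f Hd.
    have [o [z [y [x [G [HN Hw HG HG2 Hy]]]]]] := lower_facts n0 Hd.
    rewrite Hw leqNgt; apply/negP => Hlt.
    case: (arith_even n2 HN HG HG2 He Hlt) => HE0 HD0 Hy3 Hy2.
    case: (ltnP 2 n) => Hn.
      by apply: (tight3 Hn Hd HE0 HD0); rewrite Hy Hy2.
    have n2' : n = 2 by lia.
    have Hy0 : 0 < y by lia.
    subst n y; exact: (tight2 Hd HE0 HD0 Hy0).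
Qed.
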